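(* Let $L>0$, $a,b\in C^1([-L,L])$ with $a,b>0$, and $G\in C^{1,1}_{\rm loc}(\mathbb{R})$ (not necessarily even), and set $f:=-G'$. Assume there exists $x_0\in[-L,L]$ such that $$(ab)'\le 0\ \text{in }(-L,x_0]\quad\text{and}\quad (ab)'\ge 0\ \text{in }[x_0,L).$$ Let $m>0$. Then every solution $u$ of $$-(a u')'=b f(u)\ \text{ in }(-L,L),\qquad u(L)=-u(-L)=m$$ is increasing, provided either (i) $G\ge G(-m)=G(m)$ in $\mathbb{R}$; or (ii) for some $M\in(0,m]$, $G\ge G(-M)=G(M)$ in $[-M,M]$, $G'\le 0$ in $(-\infty,-M)$, and $G'\ge 0$ in $(M,+\infty)$.
   Context: A solution is a function $u\in H^1((-L,L))$ satisfying the equation weakly (hence classically, $u\in C^2((-L,L))$) together with the boundary conditions. *)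

(* Defs.v *)
From Stdlib Require Import Reals.
Open Scope R_scope.

Definition cont_on_closed (f : R -> R) (lo hi : R) : Prop :=
  forall x, lo <= x <= hi -> limit1_in f (fun y => lo <= y <= hi) (f x) x.

Definition C1_closed (f df : R -> R) (lo hi : R) : Prop :=
  cont_on_closed f lo hi /\ cont_on_closed df lo hi /\
  (forall x, lo < x < hi -> derivable_pt_lim f x (df x)).

Definition C11_loc (G g : R -> R) : Prop :=
  (forall x, derivable_pt_lim G x (g x)) /\
  (forall K, 0 < K -> exists C, forall x y, Rabs x <= K -> Rabs y <= K ->
      Rabs (g x - g y) <= C * Rabs (x - y)).

Definition is_solution (a b f : R -> R) (L m : R) (u du : R -> R) : Prop :=
  cont_on_closed u (-L) L /\
  (forall x, -L < x < L -> derivable_pt_lim u x (du x)) /\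
  (forall x, -L < x < L ->
      derivable_pt_lim (fun y => a y * du y) x (- (b x * f (u x)))) /\
  u L = m /\ u (-L) = - m.

(* Main.v *)
Require Import Defs.
From Stdlib Require Import Classical.
From Stdlib Require Import Reals Lra.
Open Scope R_scope.

Lemma lim_R_le (f : R -> R) lo hi K s :
  lo <= s < hi -> limit1_in f (fun y => lo <= y <= hi) (f hi) hi ->
  (forall t, s < t < hi -> f t <= K) -> f hi <= K.
Proof.
  intros Hs Hl Hb. destruct (Rle_dec (f hi) K) as [|Hn]; [assumption|].
  exfalso. apply Rnot_le_lt in Hn.
  destruct (Hl (f hi - K)) as [alp [Ha Hal]]; [lra|].
  set (t := hi - Rmin alp (hi - s) / 2).
  assert (Hm1 : Rmin alp (hi - s) <= alp) by apply Rmin_l.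
  assert (Hm2 : Rmin alp (hi - s) <= hi - s) by apply Rmin_r.
  assert (Hm3 : 0 < Rmin alp (hi - s)) by (apply Rmin_glb_lt; lra).
  assert (Ht : s < t < hi) by (unfold t; lra).
  specialize (Hal t). simpl in Hal. unfold R_dist in Hal.
  assert (Hd : Rabs (f t - f hi) < f hi - K).
  { apply Hal. split; [unfold t; lra|]. unfold t. rewrite Rabs_left; lra. }
  specialize (Hb t Ht). apply Rabs_def2 in Hd. lra.
Qed.

Lemma lim_L_le (f : R -> R) lo hi K s :
  lo < s <= hi -> limit1_in f (fun y => lo <= y <= hi) (f lo) lo ->
  (forall t, lo < t < s -> f t <= K) -> f lo <= K.
Proof.
  intros Hs Hl Hb. destruct (Rle_dec (f lo) K) as [|Hn]; [assumption|].
  exfalso. apply Rnot_le_lt in Hn.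
  destruct (Hl (f lo - K)) as [alp [Ha Hal]]; [lra|].
  set (t := lo + Rmin alp (s - lo) / 2).
  assert (Hm1 : Rmin alp (s - lo) <= alp) by apply Rmin_l.
  assert (Hm2 : Rmin alp (s - lo) <= s - lo) by apply Rmin_r.
  assert (Hm3 : 0 < Rmin alp (s - lo)) by (apply Rmin_glb_lt; lra).
  assert (Ht : lo < t < s) by (unfold t; lra).
  specialize (Hal t). simpl in Hal. unfold R_dist in Hal.
  assert (Hd : Rabs (f t - f lo) < f lo - K).
  { apply Hal. split; [unfold t; lra|]. unfold t. rewrite Rabs_right; lra. }
  specialize (Hb t Ht). apply Rabs_def2 in Hd. lra.
Qed.

Lemma lim_R_ge (f : R -> R) lo hi K s :
  lo <= s < hi -> limit1_in f (fun y => lo <= y <= hi) (f hi) hi ->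
  (forall t, s < t < hi -> K <= f t) -> K <= f hi.
Proof.
  intros Hs Hl Hb. apply limit_Ropp in Hl.
  assert (- f hi <= - K); [|lra].
  apply (lim_R_le (fun x => - f x) lo hi (-K) s Hs Hl).
  intros t Ht. specialize (Hb t Ht). lra.
Qed.

Lemma lim_L_ge (f : R -> R) lo hi K s :
  lo < s <= hi -> limit1_in f (fun y => lo <= y <= hi) (f lo) lo ->
  (forall t, lo < t < s -> K <= f t) -> K <= f lo.
Proof.
  intros Hs Hl Hb. apply limit_Ropp in Hl.
  assert (- f lo <= - K); [|lra].
  apply (lim_L_le (fun x => - f x) lo hi (-K) s Hs Hl).
  intros t Ht. specialize (Hb t Ht). lra.
Qed.

Lemma lim_comp_cont (u G : R -> R) D x :
  limit1_in u D (u x) x -> continuity_pt G (u x) ->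
  limit1_in (fun t => G (u t)) D (G (u x)) x.
Proof.
  intros Hu HG eps Heps.
  destruct (HG eps Heps) as [d [Hd Hd']].
  destruct (Hu d Hd) as [alp [Ha Ha']].
  exists alp. split; [exact Ha|]. intros t [Ht1 Ht2].
  destruct (Req_dec (u t) (u x)) as [E|E].
  - simpl. rewrite E. unfold R_dist. rewrite Rminus_diag, Rabs_R0. lra.
  - apply Hd'. split.
    + split; [exact I|]. intro. apply E. auto.
    + apply Ha'. auto.
Qed.

Lemma deriv_min0 (G : R -> R) c l :
  derivable_pt_lim G c l -> (forall s, G c <= G s) -> l = 0.
Proof.
  intros H Hm.
  pose (pr := exist (fun l => derivable_pt_lim G c l) l H : derivable_pt G c).
  assert (E : derive_pt G c pr = l) by reflexivity.
  rewrite <- E. apply (deriv_minimum G (c - 1) (c + 1) c pr); try lra.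
  intros; apply Hm.
Qed.

Lemma last_cross (f : R -> R) q x1 K :
  q < x1 -> (forall t, q <= t <= x1 -> continuity_pt f t) ->
  f q <= K -> K < f x1 ->
  exists p, q <= p < x1 /\ f p <= K /\ forall y, p < y <= x1 -> K < f y.
Proof.
  intros Hq Hc H1 H2.
  set (E := fun y => q <= y <= x1 /\ f y <= K).
  assert (Hb : bound E) by (exists x1; intros y [Hy _]; lra).
  assert (Hne : exists y, E y) by (exists q; split; [lra|exact H1]).
  destruct (completeness E Hb Hne) as [p [Hub Hleast]].
  assert (Hqp : q <= p) by (apply Hub; split; [lra|exact H1]).
  assert (Hpx : p <= x1) by (apply Hleast; intros y [Hy _]; lra).
  assert (Hfp : f p <= K).
  { destruct (Rle_dec (f p) K) as [|Hn]; [assumption|]. exfalso.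
    apply Rnot_le_lt in Hn.
    destruct (Hc p (conj Hqp Hpx) (f p - K)) as [d [Hd Hd']]; [lra|].
    assert (Hup : is_upper_bound E (p - d)).
    { intros y [Hy Hfy]. destruct (Rle_dec y (p - d)) as [|Hn2]; [assumption|].
      exfalso. apply Rnot_le_lt in Hn2.
      assert (Hyp : y <= p) by (apply Hub; split; assumption).
      destruct (Req_dec y p) as [->|Hne2]; [lra|].
      specialize (Hd' y). simpl in Hd'. unfold R_dist in Hd'.
      assert (Rabs (f y - f p) < f p - K).
      { apply Hd'. split; [split; [exact I| auto]|].
        rewrite Rabs_left; lra. }
      apply Rabs_def2 in H. lra. }
    specialize (Hleast _ Hup). lra. }
  exists p. split; [split; [assumption|]|split; [assumption|]].
  - destruct (Req_dec p x1) as [->|]; lra.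
  - intros y Hy. destruct (Rle_dec (f y) K) as [Hn|Hn]; [|lra].
    assert (y <= p) by (apply Hub; split; [lra|exact Hn]). lra.
Qed.

Lemma first_cross (f : R -> R) x1 q K :
  x1 < q -> (forall t, x1 <= t <= q -> continuity_pt f t) ->
  f x1 < K -> K <= f q ->
  exists p, x1 < p <= q /\ K <= f p /\ forall y, x1 <= y < p -> f y < K.
Proof.
  intros Hq Hc H1 H2.
  destruct (last_cross (fun t => - f (- t)) (-q) (-x1) (-K)) as [p [Hp1 [Hp2 Hp3]]].
  - lra.
  - intros t Ht.
    apply (continuity_pt_opp (fun t => f (- t))).
    apply (continuity_pt_comp Ropp f).
    + apply derivable_continuous_pt. exists (-1).
      apply (derivable_pt_lim_opp id t 1), derivable_pt_lim_id.
    + apply Hc. lra.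
  - rewrite Ropp_involutive. lra.
  - rewrite Ropp_involutive. lra.
  - exists (- p). split; [lra|split; [lra|]].
    intros y Hy. specialize (Hp3 (- y)). rewrite Ropp_involutive in Hp3.
    assert (- K < - f y) by (apply Hp3; lra). lra.
Qed.

Definition ctx (L : R) (a da b db g u du : R -> R) : Prop :=
  forall t, -L < t < L ->
   derivable_pt_lim u t (du t) /\
   derivable_pt_lim (fun y => a y * du y) t (b t * g (u t)) /\
   derivable_pt_lim a t (da t) /\ derivable_pt_lim b t (db t) /\
   0 < a t /\ 0 < b t.

Definition En (a b G u du : R -> R) (y : R) : R :=
  (a y * du y) * (a y * du y) / (a y * b y) - G (u y) - G (u y).

Lemma En_deriv L a da b db G g u du t :
  ctx L a da b db g u du -> (forall s, derivable_pt_lim G s (g s)) ->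
  -L < t < L ->
  derivable_pt_lim (En a b G u du) t
    (- ((a t * du t) * (a t * du t)) * (da t * b t + a t * db t)
       / ((a t * b t) * (a t * b t))).
Proof.
  intros Hc HG Ht. destruct (Hc t Ht) as [Hu [Hw [Ha [Hb [Ha0 Hb0]]]]].
  set (W := fun y => a y * du y).
  assert (HWW := derivable_pt_lim_mult W W t _ _ Hw Hw).
  assert (HP := derivable_pt_lim_mult a b t _ _ Ha Hb).
  assert (HQ := derivable_pt_lim_div (W * W)%F (a * b)%F t _ _ HWW HP).
  assert (Hne : (a * b)%F t <> 0). { unfold mult_fct. apply Rgt_not_eq. nra. }
  specialize (HQ Hne).
  assert (HGu := derivable_pt_lim_comp u G t _ _ Hu (HG (u t))).
  assert (H := derivable_pt_lim_minus _ _ t _ _ (derivable_pt_lim_minus _ _ t _ _ HQ HGu) HGu).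
  unfold En. 
  match goal with |- derivable_pt_lim _ _ ?l => replace l with
     (((b t * g (u t) * W t + W t * (b t * g (u t))) * (a * b)%F t -
         (da t * b t + a t * db t) * (W * W)%F t) / ((a * b)%F t)² -
        g (u t) * du t - g (u t) * du t) end.
  - exact H.
  - unfold W, mult_fct, Rsqr. field. split; apply Rgt_not_eq; assumption.
Qed.
Lemma En_right L a da b db G g u du x0 t1 t2 :
  ctx L a da b db g u du -> (forall s, derivable_pt_lim G s (g s)) ->
  (forall x, x0 <= x < L -> -L <= x -> 0 <= da x * b x + a x * db x) ->
  -L < t1 -> x0 <= t1 -> t1 <= t2 -> t2 < L ->
  En a b G u du t2 <= En a b G u du t1.
Proof.
  intros Hc HG Hs H1 H2 H3 H4.
  destruct (Req_dec t1 t2) as [<-|Hne]; [lra|].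
  destruct (MVT_cor2 (En a b G u du) (fun c => - (a c * du c * (a c * du c)) * (da c * b c + a c * db c) / (a c * b c * (a c * b c))) t1 t2) as [c [Hc1 Hc2]]; [lra| |].
  - intros c Hc'. apply (En_deriv L a da b db G g u du c Hc HG). lra.
  - destruct (Hc c ltac:(lra)) as [_ [_ [_ [_ [Ha0 Hb0]]]]].
    assert (0 <= da c * b c + a c * db c) by (apply Hs; lra).
    assert (Hp : 0 < (a c * b c) * (a c * b c)) by (apply Rmult_lt_0_compat; nra).
    assert (- (a c * du c * (a c * du c)) * (da c * b c + a c * db c) /
      (a c * b c * (a c * b c)) <= 0).
    { unfold Rdiv. assert (0 < / (a c * b c * (a c * b c))) by (apply Rinv_0_lt_compat; exact Hp).
      assert (0 <= a c * du c * (a c * du c)) by nra.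
      assert (0 <= a c * du c * (a c * du c) * (da c * b c + a c * db c)) by (apply Rmult_le_pos; assumption).
      assert (0 <= a c * du c * (a c * du c) * (da c * b c + a c * db c) * / (a c * b c * (a c * b c))) by (apply Rmult_le_pos; lra).
      lra. }
    nra.
Qed.

Lemma En_left L a da b db G g u du x0 t1 t2 :
  ctx L a da b db g u du -> (forall s, derivable_pt_lim G s (g s)) ->
  (forall x, -L < x <= x0 -> x <= L -> da x * b x + a x * db x <= 0) ->
  -L < t1 -> t1 <= t2 -> t2 <= x0 -> t2 < L ->
  En a b G u du t1 <= En a b G u du t2.
Proof.
  intros Hc HG Hs H1 H2 H3 H4.
  destruct (Req_dec t1 t2) as [<-|Hne]; [lra|].
  destruct (MVT_cor2 (En a b G u du) (fun c => - (a c * du c * (a c * du c)) * (da c * b c + a c * db c) / (a c * b c * (a c * b c))) t1 t2) as [c [Hc1 Hc2]]; [lra| |].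
  - intros c Hc'. apply (En_deriv L a da b db G g u du c Hc HG). lra.
  - destruct (Hc c ltac:(lra)) as [_ [_ [_ [_ [Ha0 Hb0]]]]].
    assert (da c * b c + a c * db c <= 0) by (apply Hs; lra).
    assert (Hp : 0 < (a c * b c) * (a c * b c)) by (apply Rmult_lt_0_compat; nra).
    assert (0 <= - (a c * du c * (a c * du c)) * (da c * b c + a c * db c) /
      (a c * b c * (a c * b c))).
    { unfold Rdiv. assert (0 < / (a c * b c * (a c * b c))) by (apply Rinv_0_lt_compat; exact Hp).
      assert (0 <= a c * du c * (a c * du c)) by nra.
      assert (0 <= a c * du c * (a c * du c) * - (da c * b c + a c * db c)) by (apply Rmult_le_pos; lra).
      assert (0 <= a c * du c * (a c * du c) * - (da c * b c + a c * db c) * / (a c * b c * (a c * b c))) by (apply Rmult_le_pos; lra).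
      lra. }
    nra.
Qed.

Lemma En_ge L a da b db g u du G t :
  ctx L a da b db g u du -> -L < t < L -> - G (u t) - G (u t) <= En a b G u du t.
Proof.
  intros Hc Ht. destruct (Hc t Ht) as [_ [_ [_ [_ [Ha0 Hb0]]]]].
  unfold En. assert (0 <= a t * du t * (a t * du t) / (a t * b t)); [|lra].
  unfold Rdiv. apply Rmult_le_pos; [nra|]. left. apply Rinv_0_lt_compat. nra.
Qed.

Lemma En_crit a b G u du t : du t = 0 -> En a b G u du t = - G (u t) - G (u t).
Proof. intros H. unfold En. rewrite H. unfold Rdiv. ring. Qed.

Lemma key_right L a da b db G g u du x0 x1 y :
  ctx L a da b db g u du -> (forall s, derivable_pt_lim G s (g s)) ->
  (forall x, x0 <= x < L -> -L <= x -> 0 <= da x * b x + a x * db x) ->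
  -L < x1 -> x0 <= x1 -> x1 <= y -> y < L -> du x1 = 0 ->
  G (u x1) <= G (u y).
Proof.
  intros Hc HG Hs H1 H2 H3 H4 H5.
  assert (A1 := En_right L a da b db G g u du x0 x1 y Hc HG Hs H1 H2 H3 H4).
  assert (A2 := En_ge L a da b db g u du G y Hc ltac:(lra)).
  rewrite (En_crit a b G u du x1 H5) in A1. lra.
Qed.

Lemma key_left L a da b db G g u du x0 x1 y :
  ctx L a da b db g u du -> (forall s, derivable_pt_lim G s (g s)) ->
  (forall x, -L < x <= x0 -> x <= L -> da x * b x + a x * db x <= 0) ->
  -L < y -> y <= x1 -> x1 <= x0 -> x1 < L -> du x1 = 0 ->
  G (u x1) <= G (u y).
Proof.
  intros Hc HG Hs H1 H2 H3 H4 H5.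
  assert (A1 := En_left L a da b db G g u du x0 y x1 Hc HG Hs H1 H2 H3 H4).
  assert (A2 := En_ge L a da b db g u du G y Hc ltac:(lra)).
  rewrite (En_crit a b G u du x1 H5) in A1. lra.
Qed.
Lemma Rabs_maj2 x : - x <= Rabs x.
Proof. rewrite <- Rabs_Ropp. apply Rle_abs. Qed.

Lemma dcont f t l : derivable_pt_lim f t l -> continuity_pt f t.
Proof. intros H. apply (derivable_continuous_pt f t (exist _ l H)). Qed.

Lemma dexp k t : derivable_pt_lim (fun y => exp (k * y)) t (k * exp (k * t)).
Proof.
  assert (H1 : derivable_pt_lim (mult_real_fct k id) t (k * 1))
    by (apply derivable_pt_lim_scal, derivable_pt_lim_id).
  assert (H := derivable_pt_lim_comp _ exp t _ _ H1 (derivable_pt_lim_exp _)).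
  replace (k * exp (k * t)) with (exp (mult_real_fct k id t) * (k * 1)).
  - exact H.
  - unfold mult_real_fct, id. ring.
Qed.

Lemma Phi_deriv L a da b db g u du c t :
  ctx L a da b db g u du -> -L < t < L ->
  derivable_pt_lim (fun y => (u y - c) * (u y - c) + (a y * du y) * (a y * du y)) t
    (2 * (u t - c) * du t + 2 * (a t * du t) * (b t * g (u t))).
Proof.
  intros Hc Ht. destruct (Hc t Ht) as [Hu [Hw _]].
  assert (H1 := derivable_pt_lim_minus u (fct_cte c) t _ _ Hu (derivable_pt_lim_const c t)).
  assert (H2 := derivable_pt_lim_mult _ _ t _ _ H1 H1).
  assert (H3 := derivable_pt_lim_mult _ _ t _ _ Hw Hw).
  assert (H := derivable_pt_lim_plus _ _ t _ _ H2 H3).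
  match goal with |- derivable_pt_lim _ _ ?l => replace l with
    ((du t - 0) * (u - fct_cte c)%F t + (u - fct_cte c)%F t * (du t - 0) +
         (b t * g (u t) * (a t * du t) + a t * du t * (b t * g (u t)))) end.
  - exact H.
  - unfold minus_fct, fct_cte. ring.
Qed.

Lemma Psi_deriv L a da b db g u du c k t :
  ctx L a da b db g u du -> -L < t < L ->
  derivable_pt_lim (fun y => ((u y - c) * (u y - c) + (a y * du y) * (a y * du y)) * exp (k * y)) t
    ((2 * (u t - c) * du t + 2 * (a t * du t) * (b t * g (u t))
      + k * ((u t - c) * (u t - c) + (a t * du t) * (a t * du t))) * exp (k * t)).
Proof.
  intros Hc Ht.
  assert (H := derivable_pt_lim_mult _ _ t _ _ (Phi_deriv L a da b db g u du c t Hc Ht) (dexp k t)).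
  match goal with |- derivable_pt_lim _ _ ?l => replace l with
   ((2 * (u t - c) * du t + 2 * (a t * du t) * (b t * g (u t))) * exp (k * t) +
        ((u t - c) * (u t - c) + (a t * du t) * (a t * du t)) * (k * exp (k * t))) end.
  - exact H.
  - ring.
Qed.

Lemma uniq L a da b db g u du x1 y :
  ctx L a da b db g u du ->
  (forall K, 0 < K -> exists C, forall x y, Rabs x <= K -> Rabs y <= K ->
      Rabs (g x - g y) <= C * Rabs (x - y)) ->
  -L < x1 < L -> -L < y < L -> du x1 = 0 -> g (u x1) = 0 -> u y = u x1.
Proof.
  intros Hc HL Hx1 Hy Hd0 Hg0.
  set (c := u x1).
  set (p := Rmin x1 y). set (q := Rmax x1 y).
  assert (Hp1 : p <= x1) by apply Rmin_l. assert (Hp2 : p <= y) by apply Rmin_r.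
  assert (Hq1 : x1 <= q) by apply Rmax_l. assert (Hq2 : y <= q) by apply Rmax_r.
  assert (HpL : -L < p) by (unfold p, Rmin; destruct (Rle_dec x1 y); lra).
  assert (HqL : q < L) by (unfold q, Rmax; destruct (Rle_dec x1 y); lra).
  assert (Hin : forall t, p <= t <= q -> -L < t < L) by (intros; lra).
  assert (Hpq : p <= q) by lra.
  destruct (continuity_ab_min a p q Hpq) as [mx [Hmx1 Hmx2]].
  { intros t Ht. destruct (Hc t (Hin t Ht)) as [_ [_ [Ha _]]]. exact (dcont _ _ _ Ha). }
  destruct (continuity_ab_maj b p q Hpq) as [Bm [HB1 HB2]].
  { intros t Ht. destruct (Hc t (Hin t Ht)) as [_ [_ [_ [Hb _]]]]. exact (dcont _ _ _ Hb). }
  destruct (continuity_ab_maj u p q Hpq) as [uM [HuM1 HuM2]].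
  { intros t Ht. destruct (Hc t (Hin t Ht)) as [Hu _]. exact (dcont _ _ _ Hu). }
  destruct (continuity_ab_min u p q Hpq) as [um [Hum1 Hum2]].
  { intros t Ht. destruct (Hc t (Hin t Ht)) as [Hu _]. exact (dcont _ _ _ Hu). }
  set (Ku := Rabs (u uM) + Rabs (u um) + 1).
  assert (HKu : 0 < Ku) by (unfold Ku; pose proof (Rabs_pos (u uM)); pose proof (Rabs_pos (u um)); lra).
  assert (Hub : forall t, p <= t <= q -> Rabs (u t) <= Ku).
  { intros t Ht. specialize (HuM1 t Ht). specialize (Hum1 t Ht).
    unfold Ku. pose proof (Rabs_pos (u uM)); pose proof (Rabs_pos (u um)).
    pose proof (Rle_abs (u uM)). pose proof (Rabs_maj2 (u um)).
    apply Rabs_le. lra. }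
  destruct (HL Ku HKu) as [C HC].
  destruct (Hc mx (Hin mx Hmx2)) as [_ [_ [_ [_ [Hamx _]]]]].
  destruct (Hc Bm (Hin Bm HB2)) as [_ [_ [_ [_ [_ HbBm]]]]].
  set (K := / a mx + b Bm * Rabs C).
  set (Phi := fun t => (u t - c) * (u t - c) + (a t * du t) * (a t * du t)).
  set (dPhi := fun t => 2 * (u t - c) * du t + 2 * (a t * du t) * (b t * g (u t))).
  assert (Hbound : forall t, p <= t <= q -> Rabs (dPhi t) <= K * Phi t).
  { intros t Ht. destruct (Hc t (Hin t Ht)) as [_ [_ [_ [_ [Hat Hbt]]]]].
    set (X := u t - c). set (Y := a t * du t).
    assert (Hdu : du t = Y * / a t) by (unfold Y; field; lra).
    assert (HX2 : X * X = Rabs X * Rabs X) by (rewrite <- Rabs_mult; symmetry; apply Rabs_right; apply Rle_ge, Rle_0_sqr).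
    assert (HY2 : Y * Y = Rabs Y * Rabs Y) by (rewrite <- Rabs_mult; symmetry; apply Rabs_right; apply Rle_ge, Rle_0_sqr).
    assert (HXY : 2 * Rabs X * Rabs Y <= X * X + Y * Y)
      by (rewrite HX2, HY2; pose proof (Rle_0_sqr (Rabs X - Rabs Y)); unfold Rsqr in *; lra).
    assert (Hia : 0 < / a t <= / a mx).
    { split; [apply Rinv_0_lt_compat; lra|]. apply Rinv_le_contravar; [lra|]. apply Hmx1; exact Ht. }
    assert (Hbb : b t <= b Bm) by (apply HB1; exact Ht).
    assert (Hg : Rabs (g (u t)) <= Rabs C * Rabs X).
    { replace (g (u t)) with (g (u t) - g c) by (assert (Hgc : g c = 0) by exact Hg0; rewrite Hgc; ring). unfold X, c.
      apply Rle_trans with (C * Rabs (u t - u x1)).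
      - apply HC; [apply Hub; exact Ht| apply Hub; lra].
      - apply Rmult_le_compat_r; [apply Rabs_pos|apply Rle_abs]. }
    assert (HT1 : Rabs (2 * X * du t) <= / a mx * (2 * Rabs X * Rabs Y)).
    { rewrite Hdu. rewrite !Rabs_mult. rewrite (Rabs_right 2) by lra.
      rewrite (Rabs_right (/ a t)) by lra.
      pose proof (Rabs_pos X). pose proof (Rabs_pos Y).
      assert (0 <= 2 * Rabs X * Rabs Y) by nra.
      nra. }
    assert (HT2 : Rabs (2 * Y * (b t * g (u t))) <= b Bm * Rabs C * (2 * Rabs X * Rabs Y)).
    { rewrite !Rabs_mult. rewrite (Rabs_right 2) by lra. rewrite (Rabs_right (b t)) by lra.
      pose proof (Rabs_pos X). pose proof (Rabs_pos Y). pose proof (Rabs_pos C).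
      pose proof (Rabs_pos (g (u t))).
      assert (0 <= 2 * Rabs Y) by lra.
      assert (b t * Rabs (g (u t)) <= b Bm * (Rabs C * Rabs X)).
      { apply Rmult_le_compat; lra. }
      nra. }
    unfold dPhi, Phi. fold X Y.
    eapply Rle_trans; [apply Rabs_triang|].
    assert (0 <= / a mx) by lra. assert (0 <= b Bm * Rabs C) by (pose proof (Rabs_pos C); nra).
    assert ((/ a mx + b Bm * Rabs C) * (2 * Rabs X * Rabs Y) <= (/ a mx + b Bm * Rabs C) * (X * X + Y * Y))
      by (apply Rmult_le_compat_l; lra).
    unfold K. lra. }
  assert (HPhi0 : Phi x1 = 0) by (unfold Phi; fold c; rewrite Hd0; ring).
  assert (HPhipos : forall t, 0 <= Phi t) by (intros t; unfold Phi; pose proof (Rle_0_sqr (u t - c)); pose proof (Rle_0_sqr (a t * du t)); unfold Rsqr in *; lra).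
  assert (HPy : Phi y = 0).
  { destruct (Rtotal_order x1 y) as [Hlt|[Heq|Hgt]].
    - destruct (MVT_cor2 (fun t => Phi t * exp (- K * t))
        (fun t => (dPhi t + - K * Phi t) * exp (- K * t)) x1 y Hlt) as [z [Hz2 Hz1]].
      { intros t Ht. apply (Psi_deriv L a da b db g u du c (- K) t Hc). lra. }
      assert (Hneg : (dPhi z + - K * Phi z) * exp (- K * z) <= 0).
      { assert (dPhi z <= K * Phi z) by (eapply Rle_trans; [apply Rle_abs|apply Hbound; lra]).
        pose proof (exp_pos (- K * z)). nra. }
      cbv beta in Hz2. rewrite HPhi0 in Hz2.
      pose proof (exp_pos (- K * y)). pose proof (HPhipos y).
      assert (Phi y * exp (- K * y) <= 0) by nra.
      nra.
    - subst y. exact HPhi0.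
    - destruct (MVT_cor2 (fun t => Phi t * exp (K * t))
        (fun t => (dPhi t + K * Phi t) * exp (K * t)) y x1 Hgt) as [z [Hz2 Hz1]].
      { intros t Ht. apply (Psi_deriv L a da b db g u du c K t Hc). lra. }
      assert (Hpos : 0 <= (dPhi z + K * Phi z) * exp (K * z)).
      { assert (- dPhi z <= K * Phi z) by (eapply Rle_trans; [apply Rabs_maj2|apply Hbound; lra]).
        pose proof (exp_pos (K * z)). nra. }
      cbv beta in Hz2. rewrite HPhi0 in Hz2.
      pose proof (exp_pos (K * y)). pose proof (HPhipos y).
      assert (Phi y * exp (K * y) <= 0) by nra.
      nra. }
  unfold Phi in HPy. fold c. nra.
Qed.
Lemma cross_back L a da b db g u du M q x1 :
  ctx L a da b db g u du -> (forall s, M < s -> 0 <= g s) ->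
  -L < q -> q < x1 -> x1 < L -> u q <= M -> du x1 = 0 -> M < u x1 -> False.
Proof.
  intros Hc Hg H1 H2 H3 H4 H5 H6.
  destruct (last_cross u q x1 M H2) as [p [Hp1 [Hp2 Hp3]]]; try assumption.
  { intros t Ht. destruct (Hc t ltac:(lra)) as [Hu _]. exact (dcont _ _ _ Hu). }
  assert (Hdu : forall t, p < t < x1 -> du t <= 0).
  { intros t Ht.
    destruct (MVT_cor2 (fun y => a y * du y) (fun y => b y * g (u y)) t x1) as [z [Hz1 Hz2]]; [lra| |].
    - intros y Hy. destruct (Hc y ltac:(lra)) as [_ [Hw _]]. exact Hw.
    - destruct (Hc z ltac:(lra)) as [_ [_ [_ [_ [_ Hbz]]]]].
      destruct (Hc t ltac:(lra)) as [_ [_ [_ [_ [Hat _]]]]].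
      assert (0 <= g (u z)) by (apply Hg, Hp3; lra).
      rewrite H5 in Hz1.
      assert (0 <= b z * g (u z) * (x1 - t)) by (apply Rmult_le_pos; [apply Rmult_le_pos|]; lra).
      nra. }
  destruct (MVT_cor2 u du p x1) as [z [Hz1 Hz2]]; [lra| |].
  - intros y Hy. destruct (Hc y ltac:(lra)) as [Hu _]. exact Hu.
  - assert (du z <= 0) by (apply Hdu; lra). nra.
Qed.

Lemma cross_fwd L a da b db g u du M q x1 :
  ctx L a da b db g u du -> (forall s, s < - M -> g s <= 0) ->
  -L < x1 -> x1 < q -> q < L -> - M <= u q -> du x1 = 0 -> u x1 < - M -> False.
Proof.
  intros Hc Hg H1 H2 H3 H4 H5 H6.
  destruct (first_cross u x1 q (- M) H2) as [p [Hp1 [Hp2 Hp3]]]; try assumption.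
  { intros t Ht. destruct (Hc t ltac:(lra)) as [Hu _]. exact (dcont _ _ _ Hu). }
  assert (Hdu : forall t, x1 < t < p -> du t <= 0).
  { intros t Ht.
    destruct (MVT_cor2 (fun y => a y * du y) (fun y => b y * g (u y)) x1 t) as [z [Hz1 Hz2]]; [lra| |].
    - intros y Hy. destruct (Hc y ltac:(lra)) as [_ [Hw _]]. exact Hw.
    - destruct (Hc z ltac:(lra)) as [_ [_ [_ [_ [_ Hbz]]]]].
      destruct (Hc t ltac:(lra)) as [_ [_ [_ [_ [Hat _]]]]].
      assert (g (u z) <= 0) by (apply Hg, Hp3; lra).
      rewrite H5 in Hz1.
      assert (0 <= b z * - g (u z) * (t - x1)) by (apply Rmult_le_pos; [apply Rmult_le_pos|]; lra).
      nra. }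
  destruct (MVT_cor2 u du x1 p) as [z [Hz1 Hz2]]; [lra| |].
  - intros y Hy. destruct (Hc y ltac:(lra)) as [Hu _]. exact Hu.
  - assert (du z <= 0) by (apply Hdu; lra). nra.
Qed.

Lemma Gmin_ii (G g : R -> R) M :
  (forall s, derivable_pt_lim G s (g s)) -> 0 < M -> G (- M) = G M ->
  (forall s, - M <= s <= M -> G M <= G s) ->
  (forall s, s < - M -> g s <= 0) -> (forall s, M < s -> 0 <= g s) ->
  forall s, G M <= G s.
Proof.
  intros HG HM Heq Hin Hl Hr s.
  destruct (Rlt_dec M s) as [H1|H1].
  - destruct (MVT_cor2 G g M s H1) as [z [Hz1 Hz2]]; [intros; apply HG|].
    assert (0 <= g z) by (apply Hr; lra). nra.
  - destruct (Rlt_dec s (- M)) as [H2|H2].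
    + destruct (MVT_cor2 G g s (- M) H2) as [z [Hz1 Hz2]]; [intros; apply HG|].
      assert (g z <= 0) by (apply Hl; lra). nra.
    + apply Hin; lra.
Qed.

Theorem theorem1p9 (L : R) (a da b db G g : R -> R) (x0 m : R) :
  0 < L ->
  C1_closed a da (-L) L -> C1_closed b db (-L) L ->
  (forall x, -L <= x <= L -> 0 < a x) ->
  (forall x, -L <= x <= L -> 0 < b x) ->
  C11_loc G g ->
  -L <= x0 <= L ->
  (* (ab)' = a' b + a b' <= 0 on (-L, x0] and >= 0 on [x0, L) *)
  (forall x, -L < x <= x0 -> x <= L -> da x * b x + a x * db x <= 0) ->
  (forall x, x0 <= x < L -> -L <= x -> 0 <= da x * b x + a x * db x) ->
  0 < m ->
  ( (G (- m) = G m /\ forall s, G m <= G s)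
    \/
    (exists M, 0 < M <= m /\ G (- M) = G M /\
       (forall s, - M <= s <= M -> G M <= G s) /\
       (forall s, s < - M -> g s <= 0) /\
       (forall s, M < s -> 0 <= g s)) ) ->
  forall u du : R -> R,
    is_solution a b (fun s => - g s) L m u du ->
    forall x y, -L <= x -> x < y -> y <= L -> u x < u y.
Proof.
  intros HL [_ [_ Hda]] [_ [_ Hdb]] Hapos Hbpos [HG HLip] Hx0 Hneg Hpos Hm Hcase
    u du [Hucont [Hud [Hwd [HuL HuLm]]]].
  assert (Hc : ctx L a da b db g u du).
  { intros t Ht. split; [apply Hud; exact Ht|]. split.
    - replace (b t * g (u t)) with (- (b t * - g (u t))) by ring. apply Hwd; exact Ht.
    - split; [apply Hda; exact Ht|]. split; [apply Hdb; exact Ht|].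
      split; [apply Hapos; lra|apply Hbpos; lra]. }
  assert (HuLc := Hucont L ltac:(lra)).
  assert (HuLmc := Hucont (- L) ltac:(lra)).
  rewrite HuL in HuLc. rewrite HuLm in HuLmc.
  assert (HA : forall x1, -L < x1 < L -> du x1 <> 0).
  { intros x1 Hx1 Hd0.
    set (c := u x1).
    assert (Hright : x0 <= x1 -> G c <= G m).
    { intros H0. rewrite <- HuL.
      apply (lim_R_ge (fun t => G (u t)) (- L) L (G c) x1); [lra| |].
      - apply lim_comp_cont; [exact (Hucont L ltac:(lra))|]. apply (dcont _ _ _ (HG (u L))).
      - intros t Ht. apply (key_right L a da b db G g u du x0 x1 t Hc HG Hpos); lra. }
    assert (Hleft : x1 <= x0 -> G c <= G (- m)).
    { intros H0. rewrite <- HuLm.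
      apply (lim_L_ge (fun t => G (u t)) (- L) L (G c) x1); [lra| |].
      - apply lim_comp_cont; [exact (Hucont (- L) ltac:(lra))|]. apply (dcont _ _ _ (HG (u (- L)))).
      - intros t Ht. apply (key_left L a da b db G g u du x0 x1 t Hc HG Hneg); lra. }
    assert (Hmin : forall s, G c <= G s).
    { destruct Hcase as [[Hsym Hmn] | [M [HM [HMsym [HMin [HMl HMr]]]]]].
      - intros s. destruct (Rle_dec x0 x1) as [H0|H0].
        + specialize (Hright H0). specialize (Hmn s). lra.
        + assert (x1 <= x0) by lra. specialize (Hleft H). specialize (Hmn s). lra.
      - assert (HGM := Gmin_ii G g M HG ltac:(lra) HMsym HMin HMl HMr).
        assert (HcM : G c <= G M).
        { destruct (Rlt_dec M c) as [Hc1|Hc1].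
          - exfalso.
            destruct (classic (exists q, -L < q < x1 /\ u q <= M)) as [[q [Hq1 Hq2]]|Hn].
            + apply (cross_back L a da b db g u du M q x1 Hc HMr); try lra; assumption.
            + assert (M <= u (- L)).
              { apply (lim_L_ge u (- L) L M x1); [lra| exact (Hucont (- L) ltac:(lra))|].
                intros t Ht. destruct (Rle_dec M (u t)) as [|Hn2]; [assumption|].
                exfalso. apply Hn. exists t. split; [lra|]. lra. }
              lra.
          - destruct (Rlt_dec c (- M)) as [Hc2|Hc2].
            + exfalso.
              destruct (classic (exists q, x1 < q < L /\ - M <= u q)) as [[q [Hq1 Hq2]]|Hn].
              * apply (cross_fwd L a da b db g u du M q x1 Hc HMl); try lra; assumption.
              * assert (u L <= - M).
                { apply (lim_R_le u (- L) L (- M) x1); [lra| exact (Hucont L ltac:(lra))|].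
                  intros t Ht. destruct (Rle_dec (u t) (- M)) as [|Hn2]; [assumption|].
                  exfalso. apply Hn. exists t. split; [lra|]. lra. }
                lra.
            + destruct (Rle_dec x0 x1) as [H0|H0].
              * destruct (Req_dec m M) as [HmM|HmM].
                { rewrite <- HmM. apply Hright; exact H0. }
                destruct (Req_dec c M) as [HcM|HcM]; [rewrite HcM; lra|].
                destruct (classic (exists q, x1 < q < L /\ M < u q)) as [[q [Hq1 Hq2]]|Hn].
                { destruct (Ranalysis5.IVT_interv (fun t => u t - M) x1 q) as [z [Hz1 Hz2]].
                  - intros t Ht. apply continuity_pt_minus.
                    + destruct (Hc t ltac:(lra)) as [Hu _]. exact (dcont _ _ _ Hu).
                    + apply continuity_pt_const. intros ? ?; reflexivity.
                  - lra.
                  - simpl. fold c. lra.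
                  - simpl. lra.
                  - replace M with (u z) by lra.
                    apply (key_right L a da b db G g u du x0 x1 z Hc HG Hpos); lra. }
                { exfalso. assert (u L <= M).
                  { apply (lim_R_le u (- L) L M x1); [lra| exact (Hucont L ltac:(lra))|].
                    intros t Ht. destruct (Rle_dec (u t) M) as [|Hn2]; [assumption|].
                    exfalso. apply Hn. exists t. split; [lra|]. lra. }
                  lra. }
              * assert (H0' : x1 <= x0) by lra.
                destruct (Req_dec m M) as [HmM|HmM].
                { rewrite <- HMsym, <- HmM. apply Hleft; exact H0'. }
                destruct (Req_dec c (- M)) as [HcM|HcM]; [rewrite HcM; lra|].
                destruct (classic (exists q, -L < q < x1 /\ u q < - M)) as [[q [Hq1 Hq2]]|Hn].
                { destruct (Ranalysis5.IVT_interv (fun t => u t + M) q x1) as [z [Hz1 Hz2]].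
                  - intros t Ht. apply continuity_pt_plus.
                    + destruct (Hc t ltac:(lra)) as [Hu _]. exact (dcont _ _ _ Hu).
                    + apply continuity_pt_const. intros ? ?; reflexivity.
                  - lra.
                  - simpl. lra.
                  - simpl. fold c. lra.
                  - rewrite <- HMsym. replace (- M) with (u z) by lra.
                    apply (key_left L a da b db G g u du x0 x1 z Hc HG Hneg); lra. }
                { exfalso. assert (- M <= u (- L)).
                  { apply (lim_L_ge u (- L) L (- M) x1); [lra| exact (Hucont (- L) ltac:(lra))|].
                    intros t Ht. destruct (Rle_dec (- M) (u t)) as [|Hn2]; [assumption|].
                    exfalso. apply Hn. exists t. split; [lra|]. lra. }
                  lra. } }
        intros s. specialize (HGM s). lra. }
    assert (Hg0 : g c = 0) by exact (deriv_min0 G c (g c) (HG c) Hmin).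
    assert (Hconst : forall y, -L < y < L -> u y = c).
    { intros y Hy. apply (uniq L a da b db g u du x1 y Hc HLip Hx1 Hy Hd0 Hg0). }
    assert (m <= c).
    { rewrite <- HuL. apply (lim_R_le u (- L) L c 0); [lra| exact (Hucont L ltac:(lra))|].
      intros t Ht. rewrite Hconst; lra. }
    assert (c <= - m).
    { rewrite <- HuLm. apply (lim_L_ge u (- L) L c 0); [lra| exact (Hucont (- L) ltac:(lra))|].
      intros t Ht. rewrite Hconst; lra. }
    lra. }
  assert (Hq1 : exists q1, -L < q1 < 0 /\ u q1 < 0).
  { apply NNPP. intros Hn.
    assert (0 <= u (- L)).
    { apply (lim_L_ge u (- L) L 0 0); [lra| exact (Hucont (- L) ltac:(lra))|].
      intros t Ht. destruct (Rle_dec 0 (u t)) as [|Hn2]; [assumption|].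
      exfalso. apply Hn. exists t. split; [lra|]. lra. }
    lra. }
  assert (Hq2 : exists q2, 0 < q2 < L /\ 0 < u q2).
  { apply NNPP. intros Hn.
    assert (u L <= 0).
    { apply (lim_R_le u (- L) L 0 0); [lra| exact (Hucont L ltac:(lra))|].
      intros t Ht. destruct (Rle_dec (u t) 0) as [|Hn2]; [assumption|].
      exfalso. apply Hn. exists t. split; [lra|]. lra. }
    lra. }
  destruct Hq1 as [q1 [Hq1a Hq1b]]. destruct Hq2 as [q2 [Hq2a Hq2b]].
  destruct (MVT_cor2 u du q1 q2) as [xi [Hxi1 Hxi2]]; [lra| |].
  { intros y Hy. destruct (Hc y ltac:(lra)) as [Hu _]. exact Hu. }
  assert (Hdxi : 0 < du xi) by nra.
  assert (HWc : forall t, -L < t < L -> continuity_pt (fun y => a y * du y) t).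
  { intros t Ht. destruct (Hc t Ht) as [_ [Hw _]]. exact (dcont _ _ _ Hw). }
  assert (HB : forall t, -L < t < L -> 0 < du t).
  { intros t Ht. destruct (Rlt_dec 0 (du t)) as [|Hn]; [assumption|].
    exfalso. assert (Hneg' : du t < 0) by (assert (du t <> 0) by (apply HA; exact Ht); lra).
    destruct (Hc t Ht) as [_ [_ [_ [_ [Hat _]]]]].
    destruct (Hc xi ltac:(lra)) as [_ [_ [_ [_ [Haxi _]]]]].
    destruct (Rtotal_order t xi) as [Hlt|[Heq|Hgt]].
    - destruct (Ranalysis5.IVT_interv (fun y => a y * du y) t xi) as [z [Hz1 Hz2]].
      + intros y Hy. apply HWc. lra.
      + exact Hlt.
      + nra.
      + nra.
      + destruct (Hc z ltac:(lra)) as [_ [_ [_ [_ [Haz _]]]]].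
        apply (HA z ltac:(lra)). apply (Rmult_eq_reg_l (a z)); lra.
    - subst. lra.
    - destruct (Ranalysis5.IVT_interv (fun y => - (a y * du y)) xi t) as [z [Hz1 Hz2]].
      + intros y Hy. apply (continuity_pt_opp (fun y => a y * du y)). apply HWc. lra.
      + exact Hgt.
      + nra.
      + nra.
      + destruct (Hc z ltac:(lra)) as [_ [_ [_ [_ [Haz _]]]]].
        apply (HA z ltac:(lra)). apply (Rmult_eq_reg_l (a z)); lra. }
  assert (HC : forall s t, -L < s -> s < t -> t < L -> u s < u t).
  { intros s t H1 H2 H3.
    destruct (MVT_cor2 u du s t) as [z [Hz1 Hz2]]; [lra| |].
    - intros y Hy. destruct (Hc y ltac:(lra)) as [Hu _]. exact Hu.
    - assert (0 < du z) by (apply HB; lra). nra. }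
  assert (HDl : forall t, -L < t < L -> u (- L) <= u t).
  { intros t Ht. apply (lim_L_le u (- L) L (u t) t); [lra| exact (Hucont (- L) ltac:(lra))|].
    intros s Hs. left. apply HC; lra. }
  assert (HDr : forall t, -L < t < L -> u t <= u L).
  { intros t Ht. apply (lim_R_ge u (- L) L (u t) t); [lra| exact (Hucont L ltac:(lra))|].
    intros s Hs. left. apply HC; lra. }
  intros x y Hx Hxy Hy.
  destruct (Req_dec x (- L)) as [Ex|Ex]; destruct (Req_dec y L) as [Ey|Ey].
  - subst. lra.
  - subst x. assert (HDl' := HDl ((- L + y) / 2) ltac:(lra)).
    assert (u ((- L + y) / 2) < u y) by (apply HC; lra). lra.
  - subst y. assert (HDr' := HDr ((x + L) / 2) ltac:(lra)).
    assert (u x < u ((x + L) / 2)) by (apply HC; lra). lra.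
  - apply HC; lra.
Qed.
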